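(* Consider the following model of a single group $s\in\{0,1\}$. Let $f_{q,s},f_{u,s}$ be probability densities on $\mathbb{R}$ with distribution functions $F_{q,s},F_{u,s}$, satisfying the monotone likelihood ratio property: $f_{q,s}(\theta)/f_{u,s}(\theta)$ is strictly increasing in $\theta$. Let $v_q>0$, $v_u>0$, $\omega>0$, $r=v_q/v_u$, $\underline{c}<\bar{c}$, and put $\phi_s(\theta)=f_{u,s}(\theta)/f_{q,s}(\theta)$, $\tilde c_s(\theta)=\omega\,[F_{u,s}(\theta)-F_{q,s}(\theta)]$, $G(c)=\min\!\left(1,\frac{c-\underline{c}}{\bar c-\underline{c}}\right)$. Call a pair $(\tilde\theta_s,\pi_s)$ an equilibrium for group $s$ if $$\pi_s=\frac{\phi_s(\tilde\theta_s)}{r+\phi_s(\tilde\theta_s)}\quad\text{and}\quad \pi_s=G(\tilde c_s(\tilde\theta_s)).$$ Define the firm's welfare $\mathrm{FW}_s(\theta,\pi)=\pi(1-F_{q,s}(\theta))v_q-(1-\pi)(1-F_{u,s}(\theta))v_u$, the applicants' welfare $$\mathrm{AW}_s(\theta,\pi)=\omega\Bigl(\pi(1-F_{q,s}(\theta))+(1-\pi)(1-F_{u,s}(\theta))\Bigr)+\int_{\underline{c}}^{(1-\pi)\underline{c}+\pi\bar c}c\,\mathrm{d}c,$$ and the social welfare $\mathrm{SW}_s(\theta,\pi)=\mathrm{FW}_s(\theta,\pi)+\mathrm{AW}_s(\theta,\pi)$. Suppose $(\tilde\theta_s^{(1)},\pi_s^{(1)})$ and $(\tilde\theta_s^{(2)},\pi_s^{(2)})$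 are two equilibria for group $s$ with $\pi_s^{(1)}>\pi_s^{(2)}$, and let $\mathrm{SW}_s^{(i)}=\mathrm{SW}_s(\tilde\theta_s^{(i)},\pi_s^{(i)})$. Then $\mathrm{SW}_s^{(1)}>\mathrm{SW}_s^{(2)}$.
   Context: Game-theoretic model: applicants of group $s$ each draw a cost $c$ uniformly on $[\underline c,\bar c]$ and choose effort $e\in\{q,u\}$ (qualified/unqualified); a classifier score $\theta$ has density $f_{e,s}$ given $e,s$; the firm accepts applicants with $\theta>\tilde\theta_s$, earning $v_q$ per accepted qualified and losing $v_u$ per accepted unqualified applicant; accepted applicants receive $\omega$. $\pi_s$ is the fraction of qualified applicants in group $s$. The first equilibrium equation is the firm's optimal threshold condition (accept iff $\mathbb{P}(e=q\mid\theta,s)v_q-(1-\mathbb{P}(e=q\mid\theta,s))v_u\ge 0$), the second is the applicants' best response (invest iff $c<\tilde c_s(\tilde\theta_s)$). *)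

(* Defs.v *)
From mathcomp Require Import all_boot all_order all_algebra.
From mathcomp Require Import all_classical all_reals all_analysis.
Set Implicit Arguments. Unset Strict Implicit. Unset Printing Implicit Defensive.
Import Order.TTheory GRing.Theory Num.Theory.
Local Open Scope classical_set_scope.
Local Open Scope ring_scope.

Definition is_density (R : realType) (f : R -> R) : Prop :=
  [/\ forall x, 0 <= f x,
      measurable_fun setT f
    & (\int[@lebesgue_measure R]_x (f x)%:E = 1)%E].

Definition is_cdf_of (R : realType) (f F : R -> R) : Prop :=
  forall t, ((F t)%:E = \int[@lebesgue_measure R]_(x in `]-oo, t]) (f x)%:E)%E.

Definition oint (R : realType) (a b : R) (g : R -> R) : R :=
  if a <= b then Rintegral (@lebesgue_measure R) `[a, b] g
  else - Rintegral (@lebesgue_measure R) `[b, a] g.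

Section Model.
Variables (R : realType) (fq fu Fq Fu : R -> R) (vq vu om clo chi : R).

Definition phi (t : R) : R := fu t / fq t.
Definition ctil (t : R) : R := om * (Fu t - Fq t).
Definition Gc (c : R) : R := Num.min 1 ((c - clo) / (chi - clo)).

Definition is_equilibrium (t p : R) : Prop :=
  p = phi t / (vq / vu + phi t) /\ p = Gc (ctil t).

Definition FW (t p : R) : R :=
  p * (1 - Fq t) * vq - (1 - p) * (1 - Fu t) * vu.
Definition AW (t p : R) : R :=
  om * (p * (1 - Fq t) + (1 - p) * (1 - Fu t))
  + oint clo ((1 - p) * clo + p * chi) id.
Definition SW (t p : R) : R := FW t p + AW t p.
End Model.

(* Main.v *)
Require Import Defs.
From mathcomp Require Import all_boot all_order all_algebra.
From mathcomp Require Import all_classical all_reals all_analysis.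
From mathcomp Require Import lra ring measurable_realfun.
Import Order.TTheory GRing.Theory Num.Theory.
Import numFieldNormedType.Exports.
Local Open Scope ring_scope.

Section H.
Local Open Scope classical_set_scope.
Variable R : realType.
Local Notation mu := (@lebesgue_measure R).

Lemma fin_of (c d : R) (X : \bar R) : (0 <= X)%E -> (c%:E + X = d%:E)%E ->
  X = (d - c)%:E.
Proof.
case: X => [x| |] //= _ h.
- by move: h => [] <-; congr EFin; ring.
Qed.

Lemma dens_meas (f : R -> R) (A : set R) : is_density f ->
  measurable_fun A (EFin \o f).
Proof.
case=> _ mf _; apply/measurable_EFinP; exact: (measurable_funS _ _ mf).
Qed.

Lemma cdf_split (f F : R -> R) a b : is_density f -> is_cdf_of f F -> a <= b ->
  (\int[mu]_(x in `]a, b]) (f x)%:E = ((F b) - F a)%:E)%E.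
Proof.
move=> df cF ab; apply: fin_of.
  apply: integral_ge0 => x _; rewrite lee_fin; by case: df.
rewrite !cF.
rewrite [in RHS](@itv_bndbnd_setU _ _ -oo%O (BRight a) (BRight b)) //.

rewrite ge0_integral_setU //.

- apply/measurable_EFinP; case: df => _ mf _; exact: (measurable_funS _ _ mf).
- by move=> x _; rewrite lee_fin; case: df.
- rewrite disj_set2E; apply/eqP/seteqP; split => x //=.
  by rewrite !in_itv /= => -[] xa /andP[ax _]; lra.
Qed.

Lemma cdf_tail (f F : R -> R) t : is_density f -> is_cdf_of f F ->
  (\int[mu]_(x in `]t, +oo[) (f x)%:E = (1 - F t)%:E)%E.
Proof.
move=> df cF; apply: fin_of.
  apply: integral_ge0 => x _; rewrite lee_fin; by case: df.
rewrite cF; case: (df) => _ _ <-.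
rewrite -ge0_integral_setU //.
- by rewrite (@itv_setU_setT _ _ false t).
- apply/measurable_EFinP; case: df => _ mf _; exact: (measurable_funS _ _ mf).
- by move=> x _; rewrite lee_fin; case: df.
- rewrite disj_set2E; apply/eqP/seteqP; split => x //=.
  by rewrite !in_itv /= => -[] xa /andP[ax _]; lra.
Qed.

Lemma int_id (a b : R) : a < b -> oint a b id = (b ^+ 2 - a ^+ 2) / 2.
Proof.
move=> ab; rewrite /oint ltW //.
have cF : continuous (fun x : R => x ^+ 2 / 2).
  by move=> x; apply: cvgM; [exact: exprn_continuous | exact: cvg_cst].
rewrite /Rintegral (@continuous_FTC2 _ _ (fun x : R => x ^+ 2 / 2)) //=.
- by rewrite mulrBl.
- by apply: continuous_subspaceT => x; exact: cvg_id.
- split.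
  + move=> x _; apply: derivableM => //; exact: exprn_derivable.
  + exact: cvg_at_right_filter (cF a).
  + exact: cvg_at_left_filter (cF b).
- move=> x _; rewrite derive1E.
  have h : is_derive x 1 (fun y : R => y ^+ 2 / 2) x.
    apply: is_derive_eq.
    rewrite !scaler0 add0r -scalerDl scalerA.
    have -> : 2^-1 * (x + x) = x :> R by field.
    exact: mulr1.
  exact: derive_val.
Qed.

Lemma cdf_mono (f F : R -> R) a b : is_density f -> is_cdf_of f F -> a <= b ->
  F a <= F b.
Proof.
move=> df cF ab; have := cdf_split _ _ _ _ df cF ab => e.
have : (0 <= \int[mu]_(x in `]a, b]) (f x)%:E)%E.
  apply: integral_ge0 => x _; rewrite lee_fin; by case: df.
by rewrite e lee_fin subr_ge0.
Qed.

Lemma cdf_le1 (f F : R -> R) t : is_density f -> is_cdf_of f F -> F t <= 1.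
Proof.
move=> df cF; have := cdf_tail _ _ t df cF => e.
have : (0 <= \int[mu]_(x in `]t, +oo[) (f x)%:E)%E.
  apply: integral_ge0 => x _; rewrite lee_fin; by case: df.
by rewrite e lee_fin subr_ge0.
Qed.

Lemma int_le (f g : R -> R) (D : set R) (k : R) : measurable D ->
  is_density f -> is_density g -> 0 <= k ->
  (forall x, D x -> k * f x <= g x) ->
  (k%:E * \int[mu]_(x in D) (f x)%:E <= \int[mu]_(x in D) (g x)%:E)%E.
Proof.
move=> mD df dg k0 h.
have mf : measurable_fun D (EFin \o f).
  apply/measurable_EFinP; case: df => _ mf _; exact: (measurable_funS _ _ mf).
have mg : measurable_fun D (EFin \o g).
  apply/measurable_EFinP; case: dg => _ mg _; exact: (measurable_funS _ _ mg).
have f0 : forall x, 0 <= f x by case: df.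
rewrite -ge0_integralZl //.
- apply: ge0_le_integral => //.
  all: first [ by move=> x Dx; rewrite -EFinM lee_fin; apply: h
             | by move=> x _; rewrite -EFinM lee_fin; apply: mulr_ge0
             | by move=> x _; rewrite lee_fin
             | by apply/measurable_funeM
             | idtac ].
Qed.

Lemma fosd (fq fu Fq Fu : R -> R) t : is_density fq -> is_density fu ->
  is_cdf_of fq Fq -> is_cdf_of fu Fu ->
  (forall x, 0 < fq x) -> (forall x, 0 < fu x) ->
  (forall x y, x < y -> fq x / fu x < fq y / fu y) -> Fq t <= Fu t.
Proof.
move=> dq du cq cu pq pu mlr.
case: (leP (fq t / fu t) 1) => h.
- have := int_le fq fu `]-oo, t] 1 _ dq du ler01.
  rewrite mul1e -cq -cu lee_fin; apply => //.
  move=> x /=; rewrite in_itv /= => xt; rewrite mul1r.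
  have : fq x / fu x <= 1.
    move: xt; rewrite le_eqVlt => /predU1P[-> //|xt].
    exact: (le_trans (ltW (mlr _ _ xt)) h).
  by rewrite ler_pdivrMr // mul1r.
- have := int_le fu fq `]t, +oo[ 1 _ du dq ler01.
  rewrite mul1e (cdf_tail _ _ _ du cu) (cdf_tail _ _ _ dq cq) lee_fin; move=> H.
  suff : 1 - Fu t <= 1 - Fq t by lra.
  apply: H => // x /=; rewrite in_itv /= andbT => tx; rewrite mul1r.
  have := lt_trans h (mlr _ _ tx).
  by rewrite ltr_pdivlMr // mul1r => /ltW.
Qed.

Lemma mlr_step (fq fu Fq Fu : R -> R) t1 t2 : is_density fq -> is_density fu ->
  is_cdf_of fq Fq -> is_cdf_of fu Fu ->
  (forall x, 0 < fq x) -> (forall x, 0 < fu x) ->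
  (forall x y, x < y -> fq x / fu x < fq y / fu y) -> t1 <= t2 ->
  (fq t1 / fu t1) * (Fu t2 - Fu t1) <= Fq t2 - Fq t1.
Proof.
move=> dq du cq cu pq pu mlr t12.
have k0 : 0 <= fq t1 / fu t1 by apply: divr_ge0; apply: ltW.
have := int_le fu fq `]t1, t2] (fq t1 / fu t1) _ du dq k0.
rewrite (cdf_split _ _ _ _ du cu t12) (cdf_split _ _ _ _ dq cq t12) -EFinM lee_fin; apply => //.
move=> x /=; rewrite in_itv /= => /andP[tx _].
have := mlr _ _ tx.
by rewrite ltr_pdivlMr // => /ltW.
Qed.

Lemma eq_props (p q u vq vu : R) : 0 < q -> 0 < u -> 0 < vq -> 0 < vu ->
  p = (u / q) / (vq / vu + u / q) -> [/\ 0 < p, p < 1 & p * vq * q = (1 - p) * vu * u].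
Proof.
move=> q0 u0 vq0 vu0 e.
have r0 : 0 < vq / vu by apply: divr_gt0.
have ph0 : 0 < u / q by apply: divr_gt0.
have d0 : 0 < vq / vu + u / q by apply: addr_gt0.
split.
- by rewrite e; apply: divr_gt0.
- by rewrite e ltr_pdivrMr // mul1r ltrDr.
- rewrite e; field.
  by rewrite !gt_eqF //; apply: addr_gt0; apply: mulr_gt0.
Qed.

Lemma G_inv (p c clo chi : R) : clo < chi -> p < 1 -> p = Gc clo chi c ->
  (1 - p) * clo + p * chi = c.
Proof.
move=> cc p1; rewrite /Gc => e.
have hc : chi - clo != 0 by rewrite subr_eq0 gt_eqF.
case: (leP 1 ((c - clo) / (chi - clo))) => h.
- by move: e; rewrite min_l // => e; move: p1; rewrite e ltxx.
- move: e; rewrite min_r ?ltW // => ->; field; done.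
Qed.

Lemma ratio_eq (p q u vq vu : R) : 0 < q -> 0 < u -> 0 < vq -> 0 < vu -> 0 < p ->
  p * vq * q = (1 - p) * vu * u -> q / u = (1 - p) * vu / (p * vq).
Proof.
move=> q0 u0 vq0 vu0 p0 k.
apply/eqP; rewrite eqr_div; last 2 first.
- by rewrite gt_eqF.
- by rewrite gt_eqF // mulr_gt0.
apply/eqP; rewrite -k; ring.
Qed.

Lemma ratio_contra (p1 p2 q1 u1 q2 u2 vq vu : R) :
  0 < q1 -> 0 < u1 -> 0 < q2 -> 0 < u2 -> 0 < vq -> 0 < vu -> 0 < p2 -> p2 < p1 ->
  p1 * vq * q1 = (1 - p1) * vu * u1 -> p2 * vq * q2 = (1 - p2) * vu * u2 ->
  q2 / u2 < q1 / u1 -> False.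
Proof.
move=> q10 u10 q20 u20 vq0 vu0 p20 p21 k1 k2.
have p10 : 0 < p1 by apply: lt_trans p21.
rewrite (ratio_eq _ _ _ _ _ q10 u10 vq0 vu0 p10 k1) (ratio_eq _ _ _ _ _ q20 u20 vq0 vu0 p20 k2).
rewrite ltr_pdivrMr ?mulr_gt0 // mulrAC ltr_pdivlMr ?mulr_gt0 // => h.
have hv : 0 < vu * vq by apply: mulr_gt0.
nra.
Qed.

Lemma final_alg (vq vu om clo chi p1 p2 Fq1 Fu1 Fq2 Fu2 : R) :
  0 < vq -> 0 < vu -> 0 < om -> clo < chi -> 0 < p2 -> p2 < p1 -> p1 < 1 ->
  (1 - p1) * clo + p1 * chi = om * (Fu1 - Fq1) ->
  (1 - p2) * clo + p2 * chi = om * (Fu2 - Fq2) ->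
  (1 - p1) * vu * (Fu2 - Fu1) <= p1 * vq * (Fq2 - Fq1) ->
  Fq2 <= 1 -> Fu2 <= 1 -> Fu1 <= Fu2 -> Fq2 <= Fu2 ->
  p2 * (1 - Fq2) * vq - (1 - p2) * (1 - Fu2) * vu +
  (om * (p2 * (1 - Fq2) + (1 - p2) * (1 - Fu2)) +
   (((1 - p2) * clo + p2 * chi) ^+ 2 - clo ^+ 2) / 2)
  <
  p1 * (1 - Fq1) * vq - (1 - p1) * (1 - Fu1) * vu +
  (om * (p1 * (1 - Fq1) + (1 - p1) * (1 - Fu1)) +
   (((1 - p1) * clo + p1 * chi) ^+ 2 - clo ^+ 2) / 2).
Proof.
move=> vq0 vu0 om0 cc p20 p21 p11 e1 e2 A B1 B2 C D.
rewrite e1 e2.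
set c1 := om * (Fu1 - Fq1); set c2 := om * (Fu2 - Fq2).
have c12 : c1 - c2 = (p1 - p2) * (chi - clo) by rewrite /c1 /c2 -e1 -e2; ring.
have c20 : 0 <= c2 by rewrite /c2; apply: mulr_ge0; [exact: ltW | rewrite subr_ge0].
have c12p : 0 < c1 - c2 by rewrite c12 mulr_gt0 // subr_gt0.
rewrite -subr_gt0.
have -> : p1 * (1 - Fq1) * vq - (1 - p1) * (1 - Fu1) * vu +
  (om * (p1 * (1 - Fq1) + (1 - p1) * (1 - Fu1)) + (c1 ^+ 2 - clo ^+ 2) / 2) -
  (p2 * (1 - Fq2) * vq - (1 - p2) * (1 - Fu2) * vu +
  (om * (p2 * (1 - Fq2) + (1 - p2) * (1 - Fu2)) + (c2 ^+ 2 - clo ^+ 2) / 2)) =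
  (p1 * vq * (Fq2 - Fq1) - (1 - p1) * vu * (Fu2 - Fu1))
  + (p1 - p2) * ((1 - Fq2) * vq + (1 - Fu2) * vu)
  + om * (Fu2 - Fu1) + p1 * (c1 - c2) + (p1 - p2) * c2
  + (c1 - c2) * (c1 + c2) / 2.
  by rewrite /c1 /c2; field.
have p10 : 0 < p1 by apply: lt_trans p21.
have T1 : 0 <= p1 * vq * (Fq2 - Fq1) - (1 - p1) * vu * (Fu2 - Fu1) by lra.
have T2 : 0 <= (p1 - p2) * ((1 - Fq2) * vq + (1 - Fu2) * vu).
  by apply: mulr_ge0; [lra | apply: addr_ge0; apply: mulr_ge0; lra].
have T3 : 0 <= om * (Fu2 - Fu1) by apply: mulr_ge0; lra.
have T4 : 0 < p1 * (c1 - c2) by apply: mulr_gt0.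
have T5 : 0 <= (p1 - p2) * c2 by apply: mulr_ge0; lra.
have T6 : 0 <= (c1 - c2) * (c1 + c2) / 2.
  by apply: divr_ge0; [apply: mulr_ge0; lra | lra].
lra.
Qed.
End H.

Theorem theorem1 (R : realType) (fq fu Fq Fu : R -> R) (vq vu om clo chi : R)
  (t1 p1 t2 p2 : R) :
  is_density fq -> is_density fu ->
  is_cdf_of fq Fq -> is_cdf_of fu Fu ->
  (forall x, 0 < fq x) -> (forall x, 0 < fu x) ->
  (forall x y, x < y -> fq x / fu x < fq y / fu y) ->
  0 < vq -> 0 < vu -> 0 < om -> clo < chi ->
  is_equilibrium fq fu Fq Fu vq vu om clo chi t1 p1 ->
  is_equilibrium fq fu Fq Fu vq vu om clo chi t2 p2 ->
  p2 < p1 ->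
  SW Fq Fu vq vu om clo chi t2 p2 < SW Fq Fu vq vu om clo chi t1 p1.
Proof.
move=> dq du cq cu pq pu mlr vq0 vu0 om0 cc [e1 g1] [e2 g2] p21.
rewrite /phi in e1 e2.
have [p10 p11 k1] := @eq_props R p1 (fq t1) (fu t1) vq vu (pq t1) (pu t1) vq0 vu0 e1.
have [p20 p2l k2] := @eq_props R p2 (fq t2) (fu t2) vq vu (pq t2) (pu t2) vq0 vu0 e2.
have x1 := @G_inv R p1 _ clo chi cc p11 g1.
have x2 := @G_inv R p2 _ clo chi cc p2l g2.
rewrite /ctil in x1 x2.
have t12 : t1 <= t2.
  case: (leP t1 t2) => // h; exfalso.
  exact: (@ratio_contra R p1 p2 (fq t1) (fu t1) (fq t2) (fu t2) vq vu
    (pq t1) (pu t1) (pq t2) (pu t2) vq0 vu0 p20 p21 k1 k2 (mlr _ _ h)).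
have ms := @mlr_step R fq fu Fq Fu t1 t2 dq du cq cu pq pu mlr t12.
have A : (1 - p1) * vu * (Fu t2 - Fu t1) <= p1 * vq * (Fq t2 - Fq t1).
  have q0 := pq t1; have u0 := pu t1.
  have kk : fq t1 / fu t1 = (1 - p1) * vu / (p1 * vq)
    by apply: (@ratio_eq R p1 (fq t1) (fu t1) vq vu).
  rewrite kk mulrAC ler_pdivrMr ?mulr_gt0 // in ms.
  by rewrite [p1 * vq * _]mulrC.
have B1 := @cdf_le1 R fq Fq t2 dq cq.
have B2 := @cdf_le1 R fu Fu t2 du cu.
have C := @cdf_mono R fu Fu t1 t2 du cu t12.
have D := @fosd R fq fu Fq Fu t2 dq du cq cu pq pu mlr.
rewrite /SW /FW /AW !int_id.
- exact: (@final_alg R vq vu om clo chi p1 p2 (Fq t1) (Fu t1) (Fq t2) (Fu t2)).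
- rewrite -subr_gt0; have -> : (1 - p1) * clo + p1 * chi - clo = p1 * (chi - clo) by ring.
  by apply: mulr_gt0; rewrite // subr_gt0.
- rewrite -subr_gt0; have -> : (1 - p2) * clo + p2 * chi - clo = p2 * (chi - clo) by ring.
  by apply: mulr_gt0; rewrite // subr_gt0.
Qed.
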